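(* For all $n\ge3$, $f_\infty(W_n)\le4$, where $W_n$ is the wheel obtained from a cycle of length $n$ by adding a vertex adjacent to all vertices of the cycle.
   Context: A distance function on a graph $G$ is $d:E(G)\to\mathbb{R}_{\ge0}$ with $d(vw)\le\sum_i d(v_{i-1}v_i)$ for every edge $vw$ and every $v$–$w$ path. $f_\infty(G)$ is the least $k$ such that for every distance function $d$ on $G$ there is $\phi:V(G)\to\mathbb{R}^k$ with $\|\phi(v)-\phi(w)\|_\infty=d(vw)$ for all edges $vw$. *)

(* Defs.v *)
From Stdlib Require Import Reals List Arith.
Import ListNotations.
Open Scope R_scope.

(* A graph on vertex set a subset of nat, given by a symmetric irreflexive
   adjacency relation [adj] (which also encodes the vertex set). *)

(* Wheel W_n: cycle vertices 0..n-1 (i adjacent to i+1 mod n), hub n. *)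
Definition wheel_adj (n : nat) (u v : nat) : Prop :=
  (u <= n)%nat /\ (v <= n)%nat /\ u <> v /\
  (u = n \/ v = n \/ ((u < n)%nat /\ (v < n)%nat /\
       (Nat.modulo (S u) n = v \/ Nat.modulo (S v) n = u))).

Fixpoint chain (adj : nat -> nat -> Prop) (v : nat) (l : list nat) : Prop :=
  match l with
  | [] => True
  | x :: l' => adj v x /\ chain adj x l'
  end.

Definition is_path (adj : nat -> nat -> Prop) (v w : nat) (l : list nat) : Prop :=
  chain adj v l /\ NoDup (v :: l) /\ last l v = w.

Fixpoint path_weight (d : nat -> nat -> R) (v : nat) (l : list nat) : R :=
  match l with
  | [] => 0
  | x :: l' => d v x + path_weight d x l'
  end.

(* Values of d on
   non-edges are irrelevant. *)
Definition distance_fn (adj : nat -> nat -> Prop) (d : nat -> nat -> R) : Prop :=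
  (forall u v, adj u v -> 0 <= d u v /\ d u v = d v u) /\
  (forall v w l, adj v w -> is_path adj v w l -> d v w <= path_weight d v l).

(* sup norm on R^k, vectors represented as functions nat -> R
   (coordinates 0..k-1); the sup norm of R^0 is 0. *)
Definition linf (k : nat) (x : nat -> R) : R :=
  fold_right Rmax 0 (map (fun i => Rabs (x i)) (seq 0 k)).

Definition realizable_linf (adj : nat -> nat -> Prop) (k : nat) : Prop :=
  forall d, distance_fn adj d ->
    exists phi : nat -> nat -> R,
      forall u v, adj u v -> linf k (fun i => phi u i - phi v i) = d u v.

(* Main.v *)
Require Import Defs.
From Stdlib Require Import Reals List Arith.
From Stdlib Require Import Lra Lia Classical.
Import ListNotations.
Open Scope R_scope.


Lemma step_lemma : forall r r' e E F : R,
  0 <= r' -> Rabs (r - r') <= e -> e <= r + r' -> Rabs E = r -> Rabs F <= r ->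
  exists E' F', Rabs E' <= r' /\ Rabs F' <= r' /\ Rabs (E - E') <= e /\
    Rabs (F - F') <= e /\ (Rabs (E - E') = e \/ Rabs (F - F') = e) /\
    (Rabs E' = r' \/ Rabs F' = r').
Proof.
  intros r r' e E F Hr' H1 H2 HE HF.
  revert H1 HE HF; unfold Rabs;
  destruct (Rcase_abs (r - r')); destruct (Rcase_abs E); destruct (Rcase_abs F); intros H1 HE HF.
  all: destruct (Rle_dec (r' - e) (Rabs F)) as [Hc|Hc]; revert Hc; unfold Rabs;
       destruct (Rcase_abs F); intro Hc; try lra.
  all: first
    [ exists (E + e), (- r'); solve [unfold Rabs; repeat (destruct (Rcase_abs _)); lra]
    | exists (E - e), r'; solve [unfold Rabs; repeat (destruct (Rcase_abs _)); lra]
    | exists (E + e), r'; solve [unfold Rabs; repeat (destruct (Rcase_abs _)); lra]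
    | exists (E - e), (- r'); solve [unfold Rabs; repeat (destruct (Rcase_abs _)); lra]
    | exists (- r'), (F - e); solve [unfold Rabs; repeat (destruct (Rcase_abs _)); lra]
    | exists r', (F - e); solve [unfold Rabs; repeat (destruct (Rcase_abs _)); lra]
    | exists (- r'), (F + e); solve [unfold Rabs; repeat (destruct (Rcase_abs _)); lra]
    | exists r', (F + e); solve [unfold Rabs; repeat (destruct (Rcase_abs _)); lra] ].
Qed.


Definition upd (f : nat -> R) (m : nat) (v : R) : nat -> R :=
  fun j => if Nat.eqb j m then v else f j.

Lemma upd_eq f m v : upd f m v m = v.
Proof. unfold upd; rewrite Nat.eqb_refl; auto. Qed.
Lemma upd_neq f m v j : j <> m -> upd f m v j = f j.
Proof. intro H; unfold upd; apply Nat.eqb_neq in H; rewrite H; auto. Qed.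

Lemma greedy : forall (n : nat) (r e : nat -> R),
  (forall i, (i < n)%nat -> 0 <= r i) ->
  (forall i, (S i < n)%nat -> Rabs (r i - r (S i)) <= e i /\ e i <= r i + r (S i)) ->
  exists B C : nat -> R,
    (forall i, (i < n)%nat -> Rabs (B i) <= r i /\ Rabs (C i) <= r i) /\
    (forall i, (S i < n)%nat -> Rabs (B i - B (S i)) <= e i /\ Rabs (C i - C (S i)) <= e i /\
        (Rabs (B i - B (S i)) = e i \/ Rabs (C i - C (S i)) = e i)).
Proof.
  intros n r e Hr Hs.
  destruct n as [|n].
  { exists (fun _ => 0), (fun _ => 0); split; intros; lia. }
  assert (P : forall m, (m <= n)%nat -> exists B C : nat -> R,
    (forall i, (i <= m)%nat -> Rabs (B i) <= r i /\ Rabs (C i) <= r i) /\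
    (forall i, (S i <= m)%nat -> Rabs (B i - B (S i)) <= e i /\ Rabs (C i - C (S i)) <= e i /\
        (Rabs (B i - B (S i)) = e i \/ Rabs (C i - C (S i)) = e i)) /\
    (Rabs (B m) = r m \/ Rabs (C m) = r m)).
  { induction m as [|m IH]; intro Hm.
    - exists (fun _ => r O), (fun _ => r O).
      assert (H0 : 0 <= r O) by (apply Hr; lia).
      split; [|split].
      + intros i Hi; assert (i = 0%nat) by lia; subst; rewrite Rabs_right; lra.
      + intros i Hi; lia.
      + left; rewrite Rabs_right; lra.
    - destruct (IH ltac:(lia)) as [B [C [Hb [Hl Hx]]]].
      destruct (Hs m ltac:(lia)) as [Hs1 Hs2].
      assert (Hr' : 0 <= r (S m)) by (apply Hr; lia).
      destruct (Hb m ltac:(lia)) as [HbB HbC].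
      destruct Hx as [Hx|Hx].
      + destruct (step_lemma (r m) (r (S m)) (e m) (B m) (C m) Hr' Hs1 Hs2 Hx HbC)
          as [E' [F' [h1 [h2 [h3 [h4 [h5 h6]]]]]]].
        exists (upd B (S m) E'), (upd C (S m) F').
        split; [|split].
        * intros i Hi. destruct (Nat.eq_dec i (S m)) as [->|Hne].
          -- rewrite !upd_eq; auto.
          -- rewrite !upd_neq by auto; apply Hb; lia.
        * intros i Hi. destruct (Nat.eq_dec (S i) (S m)) as [Heq|Hne].
          -- assert (i = m) by lia; subst i. rewrite !upd_eq, !upd_neq by lia. auto.
          -- rewrite !upd_neq by lia; apply Hl; lia.
        * rewrite !upd_eq; auto.
      + destruct (step_lemma (r m) (r (S m)) (e m) (C m) (B m) Hr' Hs1 Hs2 Hx HbB)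
          as [E' [F' [h1 [h2 [h3 [h4 [h5 h6]]]]]]].
        exists (upd B (S m) F'), (upd C (S m) E').
        split; [|split].
        * intros i Hi. destruct (Nat.eq_dec i (S m)) as [->|Hne].
          -- rewrite !upd_eq; auto.
          -- rewrite !upd_neq by auto; apply Hb; lia.
        * intros i Hi. destruct (Nat.eq_dec (S i) (S m)) as [Heq|Hne].
          -- assert (i = m) by lia; subst i. rewrite !upd_eq, !upd_neq by lia.
             repeat split; tauto.
          -- rewrite !upd_neq by lia; apply Hl; lia.
        * rewrite !upd_eq; tauto. }
  destruct (P n (le_n n)) as [B [C [Hb [Hl _]]]].
  exists B, C; split; intros; [apply Hb | apply Hl]; lia.
Qed.


Fixpoint psum (e : nat -> R) (i : nat) : R :=
  match i with O => 0 | S k => psum e k + e k end.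

Lemma psum_S e i : psum e (S i) = psum e i + e i.
Proof. reflexivity. Qed.

Lemma psum_mono : forall n e, (forall i, (i < n)%nat -> 0 <= e i) ->
  forall i j, (i <= j)%nat -> (j <= n)%nat -> psum e i <= psum e j.
Proof.
  intros n e He i j Hij Hjn. induction Hij.
  - lra.
  - rewrite psum_S. assert (0 <= e m) by (apply He; lia). specialize (IHHij ltac:(lia)). lra.
Qed.

Lemma r_iter : forall n (r e : nat -> R),
  (forall i, (S i < n)%nat -> Rabs (r i - r (S i)) <= e i) ->
  forall i j, (i <= j)%nat -> (j < n)%nat -> Rabs (r i - r j) <= psum e j - psum e i.
Proof.
  intros n r e Hs i j Hij Hjn. induction Hij.
  - unfold Rminus; rewrite !Rplus_opp_r, Rabs_R0; lra.
  - rewrite psum_S. specialize (IHHij ltac:(lia)). specialize (Hs m ltac:(lia)).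
    pose proof (Rabs_triang (r i - r m) (r m - r (S m))).
    replace (r i - r m + (r m - r (S m))) with (r i - r (S m)) in H by ring. lra.
Qed.

Lemma r_wrap : forall n (r e : nat -> R),
  (forall i, (S i < n)%nat -> Rabs (r i - r (S i)) <= e i) ->
  Rabs (r (pred n) - r O) <= e (pred n) ->
  forall i j, (i <= j)%nat -> (j < n)%nat -> Rabs (r i - r j) <= psum e n - (psum e j - psum e i).
Proof.
  intros n r e Hs Hw i j Hij Hjn.
  assert (Hn : n = S (pred n)) by lia.
  assert (HT : psum e n = psum e (pred n) + e (pred n)) by (rewrite Hn at 1; reflexivity).
  pose proof (r_iter n r e Hs j (pred n) ltac:(lia) ltac:(lia)) as H1.
  pose proof (r_iter n r e Hs O i ltac:(lia) ltac:(lia)) as H2.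
  simpl psum in H2.
  assert (A1 : Rabs (r i - r O) <= psum e i) by (rewrite Rabs_minus_sym; lra).
  assert (A2 : Rabs (r O - r (pred n)) <= e (pred n)) by (rewrite Rabs_minus_sym; lra).
  assert (A3 : Rabs (r (pred n) - r j) <= psum e (pred n) - psum e j) by (rewrite Rabs_minus_sym; lra).
  pose proof (Rabs_triang (r i - r O) (r O - r j)) as T1.
  pose proof (Rabs_triang (r O - r (pred n)) (r (pred n) - r j)) as T2.
  replace (r i - r O + (r O - r j)) with (r i - r j) in T1 by ring.
  replace (r O - r (pred n) + (r (pred n) - r j)) with (r O - r j) in T2 by ring.
  lra.
Qed.

Lemma lip3 : forall a a' b b' c c' k,
  Rabs (a - a') <= k -> Rabs (b - b') <= k -> Rabs (c - c') <= k ->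
  Rabs (Rmax a (Rmin b c) - Rmax a' (Rmin b' c')) <= k.
Proof.
  intros a a' b b' c c' k H1 H2 H3. revert H1 H2 H3.
  unfold Rmax, Rmin; repeat destruct (Rle_dec _ _); unfold Rabs;
  repeat destruct (Rcase_abs _); intros; lra.
Qed.

Lemma lip2max : forall a a' b b' k,
  Rabs (a - a') <= k -> Rabs (b - b') <= k -> Rabs (Rmax a b - Rmax a' b') <= k.
Proof.
  intros a a' b b' k H1 H2. revert H1 H2.
  unfold Rmax; repeat destruct (Rle_dec _ _); unfold Rabs;
  repeat destruct (Rcase_abs _); intros; lra.
Qed.

Lemma lip2min : forall a a' b b' k,
  Rabs (a - a') <= k -> Rabs (b - b') <= k -> Rabs (Rmin a b - Rmin a' b') <= k.
Proof.
  intros a a' b b' k H1 H2. revert H1 H2.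
  unfold Rmin; repeat destruct (Rle_dec _ _); unfold Rabs;
  repeat destruct (Rcase_abs _); intros; lra.
Qed.


Definition dC (e : nat -> R) (n p i : nat) : R :=
  Rmin (Rabs (psum e i - psum e p)) (psum e n - Rabs (psum e i - psum e p)).
Definition Gf (r e : nat -> R) (n p i : nat) : R := Rmax (- r i) (r p - dC e n p i).

Lemma rdist_both : forall n (r e : nat -> R),
  (forall i, (i < n)%nat -> 0 <= e i) ->
  (forall i, (S i < n)%nat -> Rabs (r i - r (S i)) <= e i) ->
  Rabs (r (pred n) - r O) <= e (pred n) ->
  forall i p, (i < n)%nat -> (p < n)%nat ->
  Rabs (r i - r p) <= Rabs (psum e i - psum e p) /\
  Rabs (r i - r p) <= psum e n - Rabs (psum e i - psum e p).
Proof.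
  intros n r e He Hs Hw i p Hi Hp.
  destruct (Nat.le_ge_cases i p) as [H|H].
  - pose proof (psum_mono n e He i p H ltac:(lia)).
    rewrite (Rabs_left1 (psum e i - psum e p)) by lra.
    pose proof (r_iter n r e Hs i p H Hp). pose proof (r_wrap n r e Hs Hw i p H Hp). lra.
  - pose proof (psum_mono n e He p i H ltac:(lia)).
    rewrite (Rabs_right (psum e i - psum e p)) by lra.
    pose proof (r_iter n r e Hs p i H Hi). pose proof (r_wrap n r e Hs Hw p i H Hi).
    rewrite Rabs_minus_sym. lra.
Qed.

Lemma G_bound : forall n (r e : nat -> R),
  (forall i, (i < n)%nat -> 0 <= r i /\ 0 <= e i) ->
  (forall i, (S i < n)%nat -> Rabs (r i - r (S i)) <= e i) ->
  Rabs (r (pred n) - r O) <= e (pred n) ->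
  forall p i, (p < n)%nat -> (i < n)%nat -> Rabs (Gf r e n p i) <= r i.
Proof.
  intros n r e Hre Hs Hw p i Hp Hi.
  assert (He : forall i, (i < n)%nat -> 0 <= e i) by (intros; apply Hre; auto).
  destruct (rdist_both n r e He Hs Hw i p Hi Hp) as [H1 H2].
  destruct (Hre i Hi) as [Hri _].
  unfold Gf, dC. revert H1 H2. generalize (Rabs (psum e i - psum e p)). intros x H1 H2.
  revert H1 H2. unfold Rmax, Rmin; repeat destruct (Rle_dec _ _); unfold Rabs;
  repeat destruct (Rcase_abs _); intros; lra.
Qed.

Lemma G_lip : forall n (r e : nat -> R),
  (forall i, (S i < n)%nat -> Rabs (r i - r (S i)) <= e i) ->
  forall p i, (S i < n)%nat -> Rabs (Gf r e n p i - Gf r e n p (S i)) <= e i.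
Proof.
  intros n r e Hs p i Hi. unfold Gf, dC.
  apply lip2max.
  - rewrite <- Rabs_Ropp. replace (- (- r i - - r (S i))) with (r i - r (S i)) by ring. auto.
  - replace (r p - Rmin (Rabs (psum e i - psum e p)) (psum e n - Rabs (psum e i - psum e p)) -
      (r p - Rmin (Rabs (psum e (S i) - psum e p)) (psum e n - Rabs (psum e (S i) - psum e p))))
      with (Rmin (Rabs (psum e (S i) - psum e p)) (psum e n - Rabs (psum e (S i) - psum e p)) -
            Rmin (Rabs (psum e i - psum e p)) (psum e n - Rabs (psum e i - psum e p))) by ring.
    assert (Hx : Rabs (Rabs (psum e (S i) - psum e p) - Rabs (psum e i - psum e p)) <= e i).
    { eapply Rle_trans. apply Rabs_triang_inv2.
      rewrite psum_S. replace (psum e i + e i - psum e p - (psum e i - psum e p)) with (e i) by ring.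
      pose proof (Hs i Hi). pose proof (Rabs_pos (r i - r (S i))).
      rewrite Rabs_right; lra. }
    apply lip2min; auto.
    replace (psum e n - Rabs (psum e (S i) - psum e p) - (psum e n - Rabs (psum e i - psum e p)))
      with (- (Rabs (psum e (S i) - psum e p) - Rabs (psum e i - psum e p))) by ring.
    rewrite Rabs_Ropp; auto.
Qed.

Lemma psum_nonneg : forall n e, (forall i, (i < n)%nat -> 0 <= e i) ->
  forall i, (i <= n)%nat -> 0 <= psum e i.
Proof. intros n e He i Hi. pose proof (psum_mono n e He O i ltac:(lia) Hi). simpl in H. lra. Qed.

Lemma psum_pred : forall n e, (0 < n)%nat -> psum e n = psum e (pred n) + e (pred n).
Proof. intros n e H. destruct n; [lia|]. reflexivity. Qed.

Lemma G_wrap : forall n (r e : nat -> R), (0 < n)%nat ->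
  (forall i, (i < n)%nat -> 0 <= e i) ->
  Rabs (r (pred n) - r O) <= e (pred n) ->
  forall p, (p < n)%nat -> Rabs (Gf r e n p (pred n) - Gf r e n p O) <= e (pred n).
Proof.
  intros n r e Hn He Hw p Hp. unfold Gf, dC.
  pose proof (psum_mono n e He p (pred n) ltac:(lia) ltac:(lia)).
  pose proof (psum_nonneg n e He p ltac:(lia)).
  pose proof (psum_pred n e Hn).
  pose proof (He (pred n) ltac:(lia)).
  simpl (psum e O).
  rewrite (Rabs_right (psum e (pred n) - psum e p)) by lra.
  rewrite (Rabs_left1 (0 - psum e p)) by lra.
  apply lip2max.
  - rewrite <- Rabs_Ropp. replace (- (- r (pred n) - - r O)) with (r (pred n) - r O) by ring. auto.
  - rewrite (Rmin_comm (- (0 - psum e p))).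
    replace (r p - Rmin (psum e (pred n) - psum e p) (psum e n - (psum e (pred n) - psum e p)) -
      (r p - Rmin (psum e n - - (0 - psum e p)) (- (0 - psum e p))))
      with (Rmin (psum e n - - (0 - psum e p)) (- (0 - psum e p)) -
            Rmin (psum e (pred n) - psum e p) (psum e n - (psum e (pred n) - psum e p))) by ring.
    apply lip2min; unfold Rabs; destruct (Rcase_abs _); lra.
Qed.

Lemma G_tight_in : forall n (r e : nat -> R),
  (forall i, (i < n)%nat -> 0 <= r i /\ 0 <= e i) ->
  forall p, (S p < n)%nat -> e p <= r p + r (S p) -> 2 * e p <= psum e n ->
  Rabs (Gf r e n p p - Gf r e n p (S p)) = e p.
Proof.
  intros n r e Hre p Hp H1 H2.
  destruct (Hre p ltac:(lia)). destruct (Hre (S p) ltac:(lia)).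
  assert (E1 : Gf r e n p p = r p).
  { unfold Gf, dC. replace (psum e p - psum e p) with 0 by ring. rewrite Rabs_R0.
    rewrite Rmin_left by lra. rewrite Rmax_right by lra. ring. }
  assert (E2 : Gf r e n p (S p) = r p - e p).
  { unfold Gf, dC. rewrite psum_S. replace (psum e p + e p - psum e p) with (e p) by ring.
    rewrite (Rabs_right (e p)) by lra.
    rewrite Rmin_left by lra. rewrite Rmax_right by lra. ring. }
  rewrite E1, E2. replace (r p - (r p - e p)) with (e p) by ring. apply Rabs_right; lra.
Qed.

Lemma G_tight_wrap : forall n (r e : nat -> R), (0 < n)%nat ->
  (forall i, (i < n)%nat -> 0 <= r i /\ 0 <= e i) ->
  e (pred n) <= r (pred n) + r O -> 2 * e (pred n) <= psum e n ->
  Rabs (Gf r e n (pred n) (pred n) - Gf r e n (pred n) O) = e (pred n).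
Proof.
  intros n r e Hn Hre H1 H2.
  destruct (Hre (pred n) ltac:(lia)). destruct (Hre O ltac:(lia)).
  pose proof (psum_pred n e Hn).
  pose proof (psum_nonneg n e (fun i h => proj2 (Hre i h)) (pred n) ltac:(lia)).
  assert (E1 : Gf r e n (pred n) (pred n) = r (pred n)).
  { unfold Gf, dC. replace (psum e (pred n) - psum e (pred n)) with 0 by ring. rewrite Rabs_R0.
    rewrite Rmin_left by lra. rewrite Rmax_right by lra. ring. }
  assert (E2 : Gf r e n (pred n) O = r (pred n) - e (pred n)).
  { unfold Gf, dC. simpl (psum e O). rewrite (Rabs_left1 (0 - psum e (pred n))) by lra.
    rewrite Rmin_right by lra. rewrite Rmax_right by lra. lra. }
  rewrite E1, E2. replace (r (pred n) - (r (pred n) - e (pred n))) with (e (pred n)) by ring.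
  apply Rabs_right; lra.
Qed.


Definition cl (e : nat -> R) (n : nat) (X : nat -> R) (i : nat) : R :=
  Rmax (X O - (psum e n - psum e i)) (Rmin (X O + (psum e n - psum e i)) (X i)).
Definition lowP (e : nat -> R) n (X : nat -> R) i := X i < X O - (psum e n - psum e i).
Definition upP (e : nat -> R) n (X : nat -> R) i := X i > X O + (psum e n - psum e i).


Lemma cl_un e n X i : 0 <= psum e n - psum e i -> ~ lowP e n X i -> ~ upP e n X i -> cl e n X i = X i.
Proof. unfold cl, lowP, upP; intros. rewrite Rmin_right by lra. rewrite Rmax_right by lra. auto. Qed.

Lemma cl_low e n X i : 0 <= psum e n - psum e i -> lowP e n X i -> cl e n X i = X O - (psum e n - psum e i).
Proof. unfold cl, lowP; intros. rewrite Rmin_right by lra. rewrite Rmax_left by lra. auto. Qed.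

Lemma cl_up e n X i : 0 <= psum e n - psum e i -> upP e n X i -> cl e n X i = X O + (psum e n - psum e i).
Proof. unfold cl, upP; intros. rewrite Rmin_left by lra. rewrite Rmax_right by lra. auto. Qed.

Lemma low_iter e n X : (forall j, (S j < n)%nat -> Rabs (X j - X (S j)) <= e j) ->
  forall i j, (i <= j)%nat -> (j < n)%nat -> lowP e n X i -> lowP e n X j.
Proof.
  intros H i j Hij Hj Hl. induction Hij; auto.
  specialize (IHHij ltac:(lia)). specialize (H m ltac:(lia)). unfold lowP in *.
  rewrite psum_S. revert H; unfold Rabs; destruct (Rcase_abs _); intros; lra.
Qed.

Lemma up_iter e n X : (forall j, (S j < n)%nat -> Rabs (X j - X (S j)) <= e j) ->
  forall i j, (i <= j)%nat -> (j < n)%nat -> upP e n X i -> upP e n X j.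
Proof.
  intros H i j Hij Hj Hl. induction Hij; auto.
  specialize (IHHij ltac:(lia)). specialize (H m ltac:(lia)). unfold upP in *.
  rewrite psum_S. revert H; unfold Rabs; destruct (Rcase_abs _); intros; lra.
Qed.

Lemma cl_lip e n X i : (S i < n)%nat -> Rabs (X i - X (S i)) <= e i -> 0 <= e i ->
  Rabs (cl e n X i - cl e n X (S i)) <= e i.
Proof.
  intros Hi H He. unfold cl. apply lip3; auto; rewrite psum_S;
  [replace (X O - (psum e n - psum e i) - (X O - (psum e n - (psum e i + e i)))) with (- e i) by ring
  |replace (X O + (psum e n - psum e i) - (X O + (psum e n - (psum e i + e i)))) with (e i) by ring];
  unfold Rabs; destruct (Rcase_abs _); lra.
Qed.

Lemma cl_bound e n X (r : nat -> R) i : Rabs (X O) <= r O -> Rabs (X i) <= r i ->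
  Rabs (r O - r i) <= psum e n - psum e i -> 0 <= r i -> Rabs (cl e n X i) <= r i.
Proof.
  intros H0 Hi Hr Hri. unfold cl. revert H0 Hi Hr.
  unfold Rmax, Rmin; repeat destruct (Rle_dec _ _); unfold Rabs;
  repeat destruct (Rcase_abs _); intros; lra.
Qed.

Lemma cl_0 e n X : 0 <= psum e n -> cl e n X O = X O.
Proof. unfold cl; simpl psum; intros. rewrite Rmin_right by lra. rewrite Rmax_right by lra. auto. Qed.

Lemma cl_wrap e n X : (0 < n)%nat -> 0 <= e (pred n) -> Rabs (cl e n X (pred n) - X O) <= e (pred n).
Proof.
  intros Hn He. unfold cl. rewrite (psum_pred n e Hn).
  replace (psum e (pred n) + e (pred n) - psum e (pred n)) with (e (pred n)) by ring.
  unfold Rmax, Rmin; repeat destruct (Rle_dec _ _); unfold Rabs;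
  repeat destruct (Rcase_abs _); intros; lra.
Qed.


Lemma exists_least : forall P : nat -> Prop, (exists j, P j) ->
  exists m, P m /\ forall j, (j < m)%nat -> ~ P j.
Proof.
  intros P [j Hj]. revert Hj. induction j as [j IH] using lt_wf_ind. intro Hj.
  destruct (classic (exists k, (k < j)%nat /\ P k)) as [[k [Hk Pk]]|Hno].
  - exact (IH k Hk Pk).
  - exists j; split; auto. intros k Hk Pk. apply Hno; eauto.
Qed.

Lemma clamped_cover e n X m i : (forall j, (S j < n)%nat -> Rabs (X j - X (S j)) <= e j) ->
  (forall j, (j < n)%nat -> 0 <= e j) ->
  (lowP e n X m \/ upP e n X m) -> (m <= i)%nat -> (S i < n)%nat ->
  Rabs (cl e n X i - cl e n X (S i)) = e i.
Proof.
  intros HL He Hm Hmi Hi.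
  assert (P1 : 0 <= psum e n - psum e i) by (pose proof (psum_mono n e He i n ltac:(lia) ltac:(lia)); lra).
  assert (P2 : 0 <= psum e n - psum e (S i)) by (pose proof (psum_mono n e He (S i) n ltac:(lia) ltac:(lia)); lra).
  pose proof (He i ltac:(lia)).
  destruct Hm as [Hm|Hm].
  - rewrite (cl_low e n X i P1 (low_iter e n X HL m i Hmi ltac:(lia) Hm)).
    rewrite (cl_low e n X (S i) P2 (low_iter e n X HL m (S i) ltac:(lia) ltac:(lia) Hm)).
    rewrite psum_S. unfold Rabs; destruct (Rcase_abs _); lra.
  - rewrite (cl_up e n X i P1 (up_iter e n X HL m i Hmi ltac:(lia) Hm)).
    rewrite (cl_up e n X (S i) P2 (up_iter e n X HL m (S i) ltac:(lia) ltac:(lia) Hm)).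
    rewrite psum_S. unfold Rabs; destruct (Rcase_abs _); lra.
Qed.

Lemma clamped_wrap e n X m : (forall j, (S j < n)%nat -> Rabs (X j - X (S j)) <= e j) ->
  (forall j, (j < n)%nat -> 0 <= e j) ->
  (lowP e n X m \/ upP e n X m) -> (m < n)%nat ->
  Rabs (cl e n X (pred n) - cl e n X O) = e (pred n).
Proof.
  intros HL He Hm Hmn.
  assert (Hn : (0 < n)%nat) by lia.
  pose proof (psum_pred n e Hn).
  pose proof (He (pred n) ltac:(lia)).
  assert (P0 : 0 <= psum e n) by (apply (psum_nonneg n e He); lia).
  rewrite (cl_0 e n X P0).
  assert (P1 : 0 <= psum e n - psum e (pred n)) by lra.
  destruct Hm as [Hm|Hm].
  - rewrite (cl_low e n X (pred n) P1 (low_iter e n X HL m (pred n) ltac:(lia) ltac:(lia) Hm)).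
    unfold Rabs; destruct (Rcase_abs _); lra.
  - rewrite (cl_up e n X (pred n) P1 (up_iter e n X HL m (pred n) ltac:(lia) ltac:(lia) Hm)).
    unfold Rabs; destruct (Rcase_abs _); lra.
Qed.

Definition Xf (r e : nat -> R) n (B C : nat -> R) p (k : nat) : nat -> R :=
  match k with O => r | 1%nat => cl e n B | 2%nat => cl e n C | _ => Gf r e n p end.

Lemma core : forall (n : nat) (r e : nat -> R), (2 <= n)%nat ->
  (forall i, (i < n)%nat -> 0 <= r i /\ 0 <= e i) ->
  (forall i, (S i < n)%nat -> Rabs (r i - r (S i)) <= e i /\ e i <= r i + r (S i)) ->
  Rabs (r (pred n) - r O) <= e (pred n) -> e (pred n) <= r (pred n) + r O ->
  (forall p, (p < n)%nat -> 2 * e p <= psum e n) ->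
  exists X : nat -> nat -> R,
   (forall k i, (i < n)%nat -> Rabs (X k i) <= r i) /\
   (forall k i, (S i < n)%nat -> Rabs (X k i - X k (S i)) <= e i) /\
   (forall k, Rabs (X k (pred n) - X k O) <= e (pred n)) /\
   (forall i, (i < n)%nat -> Rabs (X O i) = r i) /\
   (forall i, (S i < n)%nat -> exists k, (k < 4)%nat /\ Rabs (X k i - X k (S i)) = e i) /\
   (exists k, (k < 4)%nat /\ Rabs (X k (pred n) - X k O) = e (pred n)).
Proof.
  intros n r e Hn Hre Hs Hw1 Hw2 Hc.
  assert (He : forall i, (i < n)%nat -> 0 <= e i) by (intros; apply Hre; auto).
  assert (Hr : forall i, (i < n)%nat -> 0 <= r i) by (intros; apply Hre; auto).
  assert (Hs1 : forall i, (S i < n)%nat -> Rabs (r i - r (S i)) <= e i) by (intros; apply Hs; auto).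
  destruct (greedy n r e Hr Hs) as [B [C [Hb Hl]]].
  assert (HLB : forall j, (S j < n)%nat -> Rabs (B j - B (S j)) <= e j) by (intros; apply Hl; auto).
  assert (HLC : forall j, (S j < n)%nat -> Rabs (C j - C (S j)) <= e j) by (intros; apply Hl; auto).
  assert (HT : forall i, (i <= n)%nat -> 0 <= psum e n - psum e i)
    by (intros i Hi; pose proof (psum_mono n e He i n Hi ltac:(lia)); lra).
  assert (P0 : 0 <= psum e n) by (apply (psum_nonneg n e He); lia).
  assert (Hn0 : (0 < n)%nat) by lia.
  assert (Valid : forall p, (p < n)%nat ->
     (forall k i, (i < n)%nat -> Rabs (Xf r e n B C p k i) <= r i) /\
     (forall k i, (S i < n)%nat -> Rabs (Xf r e n B C p k i - Xf r e n B C p k (S i)) <= e i) /\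
     (forall k, Rabs (Xf r e n B C p k (pred n) - Xf r e n B C p k O) <= e (pred n)) /\
     (forall i, (i < n)%nat -> Rabs (Xf r e n B C p O i) = r i)).
  { intros p Hp. split; [|split; [|split]].
    - intros k i Hi. destruct k as [|[|[|k]]]; simpl.
      + rewrite Rabs_right; [lra|]. apply Rle_ge, Hr; auto.
      + apply cl_bound; try apply Hb; try lia; auto.
        pose proof (r_wrap n r e Hs1 Hw1 O i ltac:(lia) Hi). simpl psum in H. lra.
      + apply cl_bound; try apply Hb; try lia; auto.
        pose proof (r_wrap n r e Hs1 Hw1 O i ltac:(lia) Hi). simpl psum in H. lra.
      + apply G_bound; auto.
    - intros k i Hi. destruct k as [|[|[|k]]]; simpl.
      + apply Hs1; auto.
      + apply cl_lip; auto. apply He; lia.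
      + apply cl_lip; auto. apply He; lia.
      + apply G_lip; auto.
    - intros k. destruct k as [|[|[|k]]]; simpl.
      + auto.
      + rewrite (cl_0 e n B P0). apply cl_wrap; auto. apply He; lia.
      + rewrite (cl_0 e n C P0). apply cl_wrap; auto. apply He; lia.
      + apply G_wrap; auto.
    - intros i Hi. simpl. rewrite Rabs_right; [lra|]. apply Rle_ge, Hr; auto. }
  set (Q := fun j => (j < n)%nat /\ (lowP e n B j \/ upP e n B j \/ lowP e n C j \/ upP e n C j)).
  assert (NQ0 : ~ Q O).
  { unfold Q, lowP, upP; simpl psum; intros [_ H]; lra. }
  destruct (classic (exists j, Q j)) as [HQ|HQ].
  - destruct (exists_least Q HQ) as [m [Qm Hmin]].
    assert (Hm0 : m <> O) by (intro; subst; auto).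
    destruct Qm as [Hmn Qm].
    destruct (Valid (pred m) ltac:(lia)) as [V1 [V2 [V3 V4]]].
    exists (Xf r e n B C (pred m)). split; [|split; [|split; [|split; [|split]]]]; auto.
    + intros i Hi.
      destruct (Nat.eq_dec i (pred m)) as [Hip|Hip].
      * exists 3%nat; split; [lia|]. simpl. subst i.
        apply G_tight_in; auto; [apply Hs; lia | apply Hc; lia].
      * destruct (lt_dec (S i) m) as [Hlt|Hge].
        -- assert (U1 : ~ Q i) by (apply Hmin; lia).
           assert (U2 : ~ Q (S i)) by (apply Hmin; lia).
           unfold Q in U1, U2.
           assert (Ui : cl e n B i = B i /\ cl e n C i = C i).
           { split; apply cl_un; try (apply HT; lia); intro; apply U1; split; try lia; tauto. }
           assert (USi : cl e n B (S i) = B (S i) /\ cl e n C (S i) = C (S i)).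
           { split; apply cl_un; try (apply HT; lia); intro; apply U2; split; try lia; tauto. }
           destruct Ui as [Ui1 Ui2]; destruct USi as [Us1 Us2].
           destruct (Hl i Hi) as [_ [_ [Hcov|Hcov]]].
           ++ exists 1%nat; split; [lia|]; simpl; rewrite Ui1, Us1; auto.
           ++ exists 2%nat; split; [lia|]; simpl; rewrite Ui2, Us2; auto.
        -- assert (Hmi : (m <= i)%nat) by lia.
           destruct Qm as [Qm|[Qm|[Qm|Qm]]].
           ++ exists 1%nat; split; [lia|]; simpl; apply (clamped_cover e n B m); auto.
           ++ exists 1%nat; split; [lia|]; simpl; apply (clamped_cover e n B m); auto.
           ++ exists 2%nat; split; [lia|]; simpl; apply (clamped_cover e n C m); auto.
           ++ exists 2%nat; split; [lia|]; simpl; apply (clamped_cover e n C m); auto.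
    + destruct Qm as [Qm|[Qm|[Qm|Qm]]].
      * exists 1%nat; split; [lia|]; simpl; apply (clamped_wrap e n B m); auto.
      * exists 1%nat; split; [lia|]; simpl; apply (clamped_wrap e n B m); auto.
      * exists 2%nat; split; [lia|]; simpl; apply (clamped_wrap e n C m); auto.
      * exists 2%nat; split; [lia|]; simpl; apply (clamped_wrap e n C m); auto.
  - destruct (Valid (pred n) ltac:(lia)) as [V1 [V2 [V3 V4]]].
    exists (Xf r e n B C (pred n)). split; [|split; [|split; [|split; [|split]]]]; auto.
    + intros i Hi.
      assert (U1 : ~ Q i) by (intro; apply HQ; eauto).
      assert (U2 : ~ Q (S i)) by (intro; apply HQ; eauto).
      unfold Q in U1, U2.
      assert (Ui : cl e n B i = B i /\ cl e n C i = C i).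
      { split; apply cl_un; try (apply HT; lia); intro; apply U1; split; try lia; tauto. }
      assert (USi : cl e n B (S i) = B (S i) /\ cl e n C (S i) = C (S i)).
      { split; apply cl_un; try (apply HT; lia); intro; apply U2; split; try lia; tauto. }
      destruct Ui as [Ui1 Ui2]; destruct USi as [Us1 Us2].
      destruct (Hl i Hi) as [_ [_ [Hcov|Hcov]]].
      * exists 1%nat; split; [lia|]; simpl; rewrite Ui1, Us1; auto.
      * exists 2%nat; split; [lia|]; simpl; rewrite Ui2, Us2; auto.
    + exists 3%nat; split; [lia|]. simpl. apply G_tight_wrap; auto. apply Hc; lia.
Qed.


Lemma last_cons : forall (l : list nat) x v, last (x :: l) v = last l x.
Proof.
  induction l as [|y l IH]; intros x v; [reflexivity|].
  change (last (x :: y :: l) v) with (last (y :: l) v). rewrite !IH. reflexivity.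
Qed.

Lemma chain_app : forall adj v l1 l2,
  chain adj v (l1 ++ l2) <-> chain adj v l1 /\ chain adj (last l1 v) l2.
Proof.
  intros adj v l1; revert v; induction l1 as [|x l1 IH]; intros v l2.
  - simpl. tauto.
  - change (chain adj v ((x :: l1) ++ l2)) with (adj v x /\ chain adj x (l1 ++ l2)).
    change (chain adj v (x :: l1)) with (adj v x /\ chain adj x l1).
    rewrite IH, last_cons. tauto.
Qed.

Lemma pw_app : forall d v l1 l2,
  path_weight d v (l1 ++ l2) = path_weight d v l1 + path_weight d (last l1 v) l2.
Proof.
  intros d v l1; revert v; induction l1 as [|x l1 IH]; intros v l2.
  - simpl. ring.
  - change (path_weight d v ((x :: l1) ++ l2)) with (d v x + path_weight d x (l1 ++ l2)).
    change (path_weight d v (x :: l1)) with (d v x + path_weight d x l1).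
    rewrite IH, last_cons. ring.
Qed.

Lemma last_app2 : forall (l1 l2 : list nat) v, last (l1 ++ l2) v = last l2 (last l1 v).
Proof.
  induction l1 as [|x l1 IH]; intros l2 v; [reflexivity|].
  change ((x :: l1) ++ l2) with (x :: (l1 ++ l2)). rewrite !last_cons, IH. reflexivity.
Qed.

Lemma last_seq : forall k a, last (seq (S a) k) a = (a + k)%nat.
Proof.
  induction k as [|k IH]; intros a.
  - simpl. lia.
  - change (seq (S a) (S k)) with (S a :: seq (S (S a)) k). rewrite last_cons, IH. lia.
Qed.

Lemma adj_succ : forall n a, (2 <= n)%nat -> (S a < n)%nat -> wheel_adj n a (S a).
Proof.
  intros n a Hn H. unfold wheel_adj. repeat split; try lia.
  right; right. repeat split; try lia. left. apply Nat.mod_small; lia.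
Qed.

Lemma adj_wrap : forall n, (2 <= n)%nat -> wheel_adj n (pred n) O.
Proof.
  intros n Hn. unfold wheel_adj. repeat split; try lia.
  right; right. repeat split; try lia. left.
  replace (S (pred n)) with n by lia. apply Nat.Div0.mod_same.
Qed.

Lemma chain_seq : forall n k a, (2 <= n)%nat -> (a + k < n)%nat ->
  chain (wheel_adj n) a (seq (S a) k).
Proof.
  intros n k; induction k as [|k IH]; intros a Hn H; simpl; auto.
  split; [apply adj_succ; lia|]. apply IH; lia.
Qed.

Lemma pw_seq : forall n (d : nat -> nat -> R) k a, (a + k < n)%nat ->
  path_weight d a (seq (S a) k) =
  psum (fun i => d i (Nat.modulo (S i) n)) (a + k) - psum (fun i => d i (Nat.modulo (S i) n)) a.
Proof.
  intros n d k; induction k as [|k IH]; intros a H; simpl.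
  - rewrite Nat.add_0_r; ring.
  - rewrite IH by lia. replace (a + S k)%nat with (S a + k)%nat by lia.
    simpl psum. rewrite (Nat.mod_small (S a) n) by lia. ring.
Qed.

Lemma linf4 : forall (x : nat -> R) D,
  (forall j, (j < 4)%nat -> Rabs (x j) <= D) ->
  (exists j, (j < 4)%nat /\ Rabs (x j) = D) -> linf 4 x = D.
Proof.
  intros x D H [j [Hj HD]]. unfold linf. simpl.
  pose proof (H 0%nat ltac:(lia)). pose proof (H 1%nat ltac:(lia)).
  pose proof (H 2%nat ltac:(lia)). pose proof (H 3%nat ltac:(lia)).
  pose proof (Rabs_pos (x 0%nat)). pose proof (Rabs_pos (x 1%nat)).
  pose proof (Rabs_pos (x 2%nat)). pose proof (Rabs_pos (x 3%nat)).
  assert (j = 0 \/ j = 1 \/ j = 2 \/ j = 3)%nat as Hj' by lia.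
  destruct Hj' as [ Hj0 | [ Hj0 | [ Hj0 | Hj0 ] ] ]; subst j;
  revert HD H0 H1 H2 H3 H4 H5 H6 H7;
  generalize (Rabs (x 0%nat)) (Rabs (x 1%nat)) (Rabs (x 2%nat)) (Rabs (x 3%nat));
  intros a b c e; intros;
  unfold Rmax; repeat destruct (Rle_dec _ _); lra.
Qed.


Definition eE (d : nat -> nat -> R) (n i : nat) : R := d i (Nat.modulo (S i) n).

Lemma mod_succ_lt : forall n i, (S i < n)%nat -> Nat.modulo (S i) n = S i.
Proof. intros; apply Nat.mod_small; lia. Qed.
Lemma mod_succ_wrap : forall n, (0 < n)%nat -> Nat.modulo (S (pred n)) n = O.
Proof. intros. replace (S (pred n)) with n by lia. apply Nat.Div0.mod_same. Qed.

Lemma tri : forall n d, distance_fn (wheel_adj n) d -> forall a b c,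
  wheel_adj n a c -> wheel_adj n c b -> wheel_adj n a b -> a <> b -> a <> c -> c <> b ->
  d a b <= d a c + d c b.
Proof.
  intros n d [_ Hd] a b c H1 H2 H3 N1 N2 N3.
  pose proof (Hd a b [c; b] H3) as H. simpl in H.
  assert (d a b <= d a c + (d c b + 0)).
  { apply H. unfold is_path; simpl. split; [tauto|]. split; [|reflexivity].
    constructor; [simpl; intuition|]. constructor; [simpl; intuition|].
    constructor; [simpl; auto|constructor]. }
  lra.
Qed.

Lemma adj_hub : forall n i, (i < n)%nat -> wheel_adj n n i /\ wheel_adj n i n.
Proof. intros; unfold wheel_adj; split; repeat split; try lia; tauto. Qed.

Lemma adj_next : forall n i, (3 <= n)%nat -> (i < n)%nat ->
  wheel_adj n i (Nat.modulo (S i) n) /\ wheel_adj n (Nat.modulo (S i) n) i /\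
  i <> Nat.modulo (S i) n /\ (Nat.modulo (S i) n < n)%nat.
Proof.
  intros n i Hn Hi.
  assert (Hlt : (Nat.modulo (S i) n < n)%nat) by (apply Nat.mod_upper_bound; lia).
  assert (Hne : i <> Nat.modulo (S i) n).
  { destruct (lt_dec (S i) n). rewrite mod_succ_lt; lia.
    replace i with (pred n) by lia. rewrite mod_succ_wrap; lia. }
  unfold wheel_adj; repeat split; try lia; right; right; repeat split; auto.
Qed.


Lemma cycle_ineq : forall n d, (3 <= n)%nat -> distance_fn (wheel_adj n) d ->
  forall p, (p < n)%nat -> 2 * eE d n p <= psum (eE d n) n.
Proof.
  intros n d Hn Hd p Hp.
  destruct Hd as [Hd1 Hd2].
  assert (Hn0 : (0 < n)%nat) by lia.
  assert (HT : psum (eE d n) n = psum (eE d n) (pred n) + eE d n (pred n)) by (apply psum_pred; lia).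
  assert (Ewrap : eE d n (pred n) = d (pred n) O) by (unfold eE; rewrite mod_succ_wrap; auto).
  assert (PW : forall k a, (a + k < n)%nat ->
     path_weight d a (seq (S a) k) = psum (eE d n) (a + k) - psum (eE d n) a)
    by (intros; apply pw_seq; auto).
  destruct (lt_dec (S p) n) as [Hsp|Hsp].
  - assert (Ep : eE d n p = d p (S p)) by (unfold eE; rewrite mod_succ_lt; auto).
    assert (Hsym : d p (S p) = d (S p) p) by (apply Hd1; apply adj_succ; lia).
    set (k := (pred n - S p)%nat).
    set (l := seq (S (S p)) k ++ seq 0 (S p)).
    assert (Hadj : wheel_adj n (S p) p).
    { unfold wheel_adj; repeat split; try lia. right; right; repeat split; try lia.
      right. apply Nat.mod_small; lia. }
    assert (Hl1 : last (seq (S (S p)) k) (S p) = pred n) by (rewrite last_seq; unfold k; lia).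
    assert (Hpath : is_path (wheel_adj n) (S p) p l).
    { unfold is_path, l. split; [|split].
      - apply chain_app. split. apply chain_seq; unfold k; lia.
        rewrite Hl1. change (seq 0 (S p)) with (0%nat :: seq 1 p). simpl chain. split.
        apply adj_wrap; lia. apply chain_seq; lia.
      - rewrite app_comm_cons. rewrite cons_seq. apply NoDup_app; try apply seq_NoDup.
        intros a Ha1 Ha2. apply in_seq in Ha1. apply in_seq in Ha2. lia.
      - rewrite last_app2, Hl1. change (seq 0 (S p)) with (0%nat :: seq 1 p).
        rewrite last_cons. rewrite last_seq. lia. }
    pose proof (Hd2 (S p) p l Hadj Hpath) as H.
    unfold l in H. rewrite pw_app, Hl1 in H.
    change (seq 0 (S p)) with (0%nat :: seq 1 p) in H.
    change (path_weight d (pred n) (0%nat :: seq 1 p)) with (d (pred n) 0%nat + path_weight d 0%nat (seq 1 p)) in H.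
    rewrite PW in H by (unfold k; lia). rewrite PW in H by lia.
    replace (S p + k)%nat with (pred n) in H by (unfold k; lia).
    simpl (0 + p)%nat in H. simpl (psum (eE d n) 0) in H.
    rewrite psum_S in H. lra.
  - assert (Hpn : p = pred n) by lia. subst p.
    assert (Hadj : wheel_adj n 0 (pred n)).
    { unfold wheel_adj; repeat split; try lia. right; right; repeat split; try lia.
      right. apply mod_succ_wrap; lia. }
    assert (Hsym : d (pred n) O = d O (pred n)) by (apply Hd1; apply adj_wrap; lia).
    assert (Hpath : is_path (wheel_adj n) 0 (pred n) (seq 1 (pred n))).
    { split; [|split].
      - apply chain_seq; lia.
      - rewrite cons_seq. replace (S (pred n)) with n by lia. apply seq_NoDup.
      - rewrite last_seq. lia. }
    pose proof (Hd2 0%nat (pred n) _ Hadj Hpath) as H.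
    rewrite PW in H by lia. simpl (0 + pred n)%nat in H. simpl (psum (eE d n) 0) in H.
    lra.
Qed.


Theorem mainTheorem12 :
  forall n : nat, (3 <= n)%nat ->
    exists k : nat, (k <= 4)%nat /\ realizable_linf (wheel_adj n) k.
Proof.
  intros n Hn. exists 4%nat. split; [lia|].
  intros d Hd.
  pose proof Hd as [Hd1 Hd2].
  set (r := fun i => d n i).
  set (e := eE d n).
  assert (Hn0 : (0 < n)%nat) by lia.
  assert (Hre : forall i, (i < n)%nat -> 0 <= r i /\ 0 <= e i).
  { intros i Hi. destruct (adj_hub n i Hi) as [A1 _]. destruct (adj_next n i Hn Hi) as [A2 _].
    split; [apply (Hd1 _ _ A1) | apply (Hd1 _ _ A2)]. }
  assert (Tri3 : forall i, (i < n)%nat ->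
     Rabs (r i - r (Nat.modulo (S i) n)) <= e i /\ e i <= r i + r (Nat.modulo (S i) n)).
  { intros i Hi. destruct (adj_hub n i Hi) as [A1 A1'].
    destruct (adj_next n i Hn Hi) as [A2 [A2' [Hne Hlt]]].
    destruct (adj_hub n _ Hlt) as [A3 A3'].
    assert (S1 : d i (Nat.modulo (S i) n) = d (Nat.modulo (S i) n) i) by (apply Hd1; auto).
    assert (S2 : d i n = d n i) by (apply Hd1; auto).
    pose proof (tri n d Hd n i (Nat.modulo (S i) n) A3 A2' A1 ltac:(lia) ltac:(lia) ltac:(auto)).
    pose proof (tri n d Hd n (Nat.modulo (S i) n) i A1 A2 A3 ltac:(lia) ltac:(lia) ltac:(auto)).
    pose proof (tri n d Hd i (Nat.modulo (S i) n) n A1' A3 A2 ltac:(auto) ltac:(lia) ltac:(lia)).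
    unfold r, e, eE. split; [|lra].
    unfold Rabs; destruct (Rcase_abs _); lra. }
  assert (Hs : forall i, (S i < n)%nat -> Rabs (r i - r (S i)) <= e i /\ e i <= r i + r (S i)).
  { intros i Hi. pose proof (Tri3 i ltac:(lia)). rewrite mod_succ_lt in H by auto. auto. }
  assert (Hw : Rabs (r (pred n) - r O) <= e (pred n) /\ e (pred n) <= r (pred n) + r O).
  { pose proof (Tri3 (pred n) ltac:(lia)). rewrite mod_succ_wrap in H by auto. auto. }
  assert (Hc : forall p, (p < n)%nat -> 2 * e p <= psum e n) by (intros; apply cycle_ineq; auto).
  destruct (core n r e ltac:(lia) Hre Hs (proj1 Hw) (proj2 Hw) Hc)
    as [X [V1 [V2 [V3 [Cs [Ce Cw]]]]]].
  exists (fun u j => if Nat.ltb u n then X j u else 0).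
  intros u v Huv.
  pose proof Huv as Huv'.
  destruct Huv' as [Hu [Hv [Hne Hcase]]].
  assert (Cyc : forall a, (a < n)%nat ->
     linf 4 (fun j => (if Nat.ltb a n then X j a else 0) -
                      (if Nat.ltb (Nat.modulo (S a) n) n then X j (Nat.modulo (S a) n) else 0)) = e a).
  { intros a Ha. destruct (adj_next n a Hn Ha) as [_ [_ [_ Hlt]]].
    rewrite (proj2 (Nat.ltb_lt a n) Ha), (proj2 (Nat.ltb_lt _ n) Hlt).
    destruct (lt_dec (S a) n) as [Hsa|Hsa].
    - rewrite mod_succ_lt by auto. apply linf4.
      + intros j _. apply V2; auto.
      + apply Ce; auto.
    - assert (a = pred n) by lia. subst a. rewrite mod_succ_wrap by auto. apply linf4.
      + intros j _. apply V3.
      + apply Cw. }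
  assert (Spk : forall a, (a < n)%nat ->
     linf 4 (fun j => (if Nat.ltb a n then X j a else 0) - (if Nat.ltb n n then X j n else 0)) = r a).
  { intros a Ha. rewrite (proj2 (Nat.ltb_lt a n) Ha), Nat.ltb_irrefl.
    apply linf4.
    - intros j _. rewrite Rminus_0_r. apply V1; auto.
    - exists 0%nat; split; [lia|]. rewrite Rminus_0_r. apply Cs; auto. }
  destruct Hcase as [Hun|[Hvn|[Hul [Hvl [Hm|Hm]]]]].
  - subst u. assert (Hvl : (v < n)%nat) by lia.
    change (d n v) with (r v). rewrite <- (Spk v Hvl). unfold linf. f_equal. apply map_ext. intros j.
    rewrite <- Rabs_Ropp. f_equal. ring.
  - subst v. assert (Hul : (u < n)%nat) by lia.
    rewrite (Spk u Hul). unfold r. apply Hd1. apply (adj_hub n u Hul).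
  - subst v. apply (Cyc u Hul).
  - subst u. rewrite <- (proj2 (Hd1 v (Nat.modulo (S v) n) (proj1 (adj_next n v Hn Hvl)))).
    change (d v (Nat.modulo (S v) n)) with (e v). rewrite <- (Cyc v Hvl).
    unfold linf. f_equal. apply map_ext. intros j.
    rewrite <- Rabs_Ropp. f_equal. ring.
Qed.
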